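(* Let $\dot G\in\mathcal C_1\cup\mathcal C_4\cup\mathcal C_5$ be a connected, non-complete, $5$-regular and $1$ net-regular SRSG with parameters $(n,5,a,b,c)$. Then: (1) $a<3$; (2) if $a=0$, then two vertices joined by a positive edge have no common neighbours; if $b=0$, then two vertices joined by a negative edge have no common neighbours; (3) if $a=-1$, then $b\le 0$; (4) if $a=-2$, then $b\ge -1$; (5) $a>-3$; (6) $-2\le b<3$; (7) if $\dot G$ contains a balanced triangle (product of edge signs $+1$) with two negative edges, then $b\le 0$; (8) if $b=2$ or $b=-1$, then $a\le 0$; (9) if $b=-2$, then $a\ge 1$.
   Context: A signed graph $\dot G=(G,\sigma)$ is a simple graph $G$ with $\sigma:E(G)\to\{\pm1\}$; adjacency matrix $A_{\dot G}$ has entries $\sigma(v_iv_j)$ for adjacent vertices and $0$ otherwise. Degree and connectedness refer to $G$; net-degree is $d^+(v)-d^-(v)$; $\rho$ net-regular means all net-degrees equal $\rho$. $\dot G$ on $n$ vertices is an SRSG if it is neither homogeneous (all edges of one sign) complete nor edgeless and there are $r\in\mathbb N$, $a,b,c\in\mathbb Z$ with $(A^2_{\dot G})_{ii}=r$, $(A^2_{\dot G})_{ij}=a$ for positive edges $v_iv_j$, $b$ for negative edges, $c$ for distinct non-adjacent pairs; parameters $(n,r,a,b,c)$. Classes of inhomogeneous SRSGs: $\mathcal C_1$: $a=-b$ and (complete, or non-complete with $c\ne0$); $\mathcal C_4$: $a\ne-b$, non-complete, $c=0$; $\mathcal C_5$: $a\ne-b$, non-complete, $c\neq0$, $c\neq\frac{a+b}2$.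 *)

(* Defs.v *)
From mathcomp Require Import all_boot all_order all_algebra.
Set Implicit Arguments. Unset Strict Implicit. Unset Printing Implicit Defensive.
Import Order.TTheory GRing.Theory Num.Theory.
Local Open Scope ring_scope.

Record signed_graph (T : finType) := SignedGraph {
  sg_edge : rel T;
  sg_pos : rel T;
  sg_sym : symmetric sg_edge;
  sg_irr : irreflexive sg_edge;
  sg_pos_sym : symmetric sg_pos
}.

Section SG.
Variables (T : finType) (G : signed_graph T).
Local Notation E := (sg_edge G).

Definition posE (x y : T) : bool := E x y && sg_pos G x y.
Definition negE (x y : T) : bool := E x y && ~~ sg_pos G x y.

Definition adjA (x y : T) : int :=
  if E x y then (if sg_pos G x y then 1 else -1) else 0.

Definition adjA2 (x y : T) : int := \sum_(z : T) adjA x z * adjA z y.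

Definition degree (x : T) : nat := #|[set y | E x y]|.
Definition pdeg (x : T) : nat := #|[set y | posE x y]|.
Definition ndeg (x : T) : nat := #|[set y | negE x y]|.
Definition netdeg (x : T) : int := (pdeg x)%:Z - (ndeg x)%:Z.

Definition regular (k : nat) : Prop := forall x, degree x = k.
Definition net_regular (rho : int) : Prop := forall x, netdeg x = rho.

Definition connected : Prop := forall x y, connect E x y.
Definition complete : Prop := forall x y, x != y -> E x y.
Definition edgeless : Prop := forall x y, ~~ E x y.
Definition homogeneous : Prop :=
  (forall x y, E x y -> sg_pos G x y) \/ (forall x y, E x y -> ~~ sg_pos G x y).
Definition inhomogeneous : Prop :=
  (exists x y, posE x y) /\ (exists x y, negE x y).

Definition SRSG (n r : nat) (a b c : int) : Prop :=
  [/\ n = #|T|,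
      ~ (homogeneous /\ complete),
      ~ edgeless &
      [/\ forall x, adjA2 x x = r%:Z,
      forall x y, posE x y -> adjA2 x y = a,
      forall x y, negE x y -> adjA2 x y = b &
      forall x y, x != y -> ~~ E x y -> adjA2 x y = c]].

Definition class_C1 (n r : nat) (a b c : int) : Prop :=
  [/\ SRSG n r a b c, inhomogeneous, a = - b &
      (complete \/ (~ complete /\ c <> 0))].
Definition class_C4 (n r : nat) (a b c : int) : Prop :=
  [/\ SRSG n r a b c, inhomogeneous, a <> - b, ~ complete & c = 0].
(* c <> (a+b)/2 is written 2c <> a+b to stay in int *)
Definition class_C5 (n r : nat) (a b c : int) : Prop :=
  [/\ SRSG n r a b c, inhomogeneous, a <> - b, ~ complete &
      c <> 0 /\ 2 * c <> a + b].

Definition no_common_nb (x y : T) : Prop := forall z, ~~ (E x z && E y z).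

Definition balanced_triangle (x y z : T) : bool :=
  [&& E x y, E y z, E z x & adjA x y * adjA y z * adjA z x == 1].

End SG.

(* Main.v *)
Require Import Defs.
From mathcomp Require Import all_boot all_order all_algebra.
From mathcomp Require Import zify ring.
Import Order.TTheory GRing.Theory Num.Theory.
Local Open Scope ring_scope.
Set Implicit Arguments. Unset Strict Implicit.

Definition idx : seq nat := [:: 0; 1; 2; 3; 4]%N.
Definition sumL (F : nat -> int) : int := foldr (fun j acc => F j + acc) 0 idx.
Definition countL (P : nat -> bool) : nat := foldr (fun j acc => (P j : nat) + acc)%N 0%N idx.
Definition sgn (i : nat) : int := if (i < 3)%N then 1 else -1.
Definition absv (v : int) : int := if v == 0 then 0 else 1.

Definition mk (e01 e02 e03 e04 e12 e13 e14 e23 e24 e34 : int) (i j : nat) : int :=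
  match i, j with
  | 0,1 => e01 | 0,2 => e02 | 0,3 => e03 | 0,4 => e04
  | 1,0 => e01 | 2,0 => e02 | 3,0 => e03 | 4,0 => e04
  | 1,2 => e12 | 1,3 => e13 | 1,4 => e14
  | 2,1 => e12 | 3,1 => e13 | 4,1 => e14
  | 2,3 => e23 | 2,4 => e24 | 3,2 => e23 | 4,2 => e24
  | 3,4 => e34 | 4,3 => e34
  | _,_ => 0%R end.

Definition av (e : nat -> nat -> int) (i : nat) : int := sumL (fun j => sgn j * e j i).

Definition cond (e : nat -> nat -> int) : bool :=
  all (fun i => ((i < 3) + countL (fun j => e i j == 1%R) <= 3)%N
             && ((3 <= i) + countL (fun j => e i j == (-1)%R) <= 2)%N
             && (sumL (fun j => sgn j * absv (e j i)) == sumL (fun j => e j i))) idx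
  && (av e 0 == av e 1) && (av e 1 == av e 2) && (av e 3 == av e 4).

Definition concl (e : nat -> nat -> int) (a b : int) : bool :=
  [&& [|| (a == -4) && (b == 3), (a == -4) && (b == 4), (a == 0) && (b == 0),
        (a == 0) && (b == 1), (a == 2) && (b == -2), (a == 2) && (b == 0) | (a == 2) && (b == 1)],
   (a == 0) ==> all (fun i => all (fun j => (3 <= i)%N || (e i j == 0)) idx) idx,
   (b == 0) ==> all (fun i => all (fun j => (i < 3)%N || (e i j == 0)) idx) idx,
   (e 3 4 == 1) ==> (b <= 0),
   (a == -4) ==> [&& e 0 1 == -1, e 0 2 == -1 & e 1 2 != 0],
   (a == -4) && (e 3 4 != 0) ==> (b == 4) &
   (a == -4) && (b == 4) ==> all (fun i => all (fun j => (i == j) || (e i j != 0)) idx) idx].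

Definition check e := cond e ==> concl e (av e 0) (av e 3).

Definition vals : seq int := [:: -1; 0; 1].

Lemma all_ok : all (fun e01 => all (fun e02 => all (fun e03 => all (fun e04 =>
  all (fun e12 => all (fun e13 => all (fun e14 => all (fun e23 => all (fun e24 =>
  all (fun e34 => check (mk e01 e02 e03 e04 e12 e13 e14 e23 e24 e34))
  vals) vals) vals) vals) vals) vals) vals) vals) vals) vals.
Proof. vm_compute. reflexivity. Qed.

Lemma adjA_sym (T : finType) (G : signed_graph T) x y : adjA G x y = adjA G y x.
Proof. by rewrite /adjA (sg_sym G x y) (sg_pos_sym G x y). Qed.

Lemma adjA_xx (T : finType) (G : signed_graph T) x : adjA G x x = 0.
Proof. by rewrite /adjA sg_irr. Qed.

Lemma adjA_vals (T : finType) (G : signed_graph T) x y : adjA G x y \in vals.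
Proof. by rewrite /adjA; case: (sg_edge G x y); case: (sg_pos G x y). Qed.

Lemma adjA_pos (T : finType) (G : signed_graph T) x y : (adjA G x y == 1) = posE G x y.
Proof. by rewrite /adjA /posE; case: (sg_edge G x y); case: (sg_pos G x y). Qed.

Lemma adjA_neg (T : finType) (G : signed_graph T) x y : (adjA G x y == -1) = negE G x y.
Proof. by rewrite /adjA /negE; case: (sg_edge G x y); case: (sg_pos G x y). Qed.

Lemma adjA_E (T : finType) (G : signed_graph T) x y : (adjA G x y != 0) = sg_edge G x y.
Proof. by rewrite /adjA; case: (sg_edge G x y); case: (sg_pos G x y). Qed.

Lemma absv_adj (T : finType) (G : signed_graph T) x y :
  absv (adjA G x y) = (sg_edge G x y)%:R.
Proof. by rewrite /absv /adjA; case: (sg_edge G x y); case: (sg_pos G x y). Qed.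

Lemma degs (T : finType) (G : signed_graph T) x :
  regular G 5 -> net_regular G 1 -> pdeg G x = 3%N /\ ndeg G x = 2%N.
Proof.
move=> /(_ x) Hr /(_ x); rewrite /netdeg => Hn.
have Hs : (pdeg G x + ndeg G x = degree G x)%N.
  rewrite /pdeg /ndeg /degree -cardsUI.
  have -> : [set y | posE G x y] :&: [set y | negE G x y] = set0.
    apply/setP => y; rewrite !inE /posE /negE.
    by case: (sg_edge G x y); case: (sg_pos G x y).
  rewrite cards0 addn0; apply: eq_card => y; rewrite !inE /posE /negE.
  by case: (sg_edge G x y); case: (sg_pos G x y).
rewrite Hr in Hs. lia.
Qed.

Lemma sum_ind (T : finType) (A : {set T}) :
  \sum_z ((z \in A) : nat)%:R = #|A|%:R :> int.
Proof.
rewrite -sumr_const [RHS]big_mkcond /=; apply: eq_bigr => z _.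
by case: (z \in A).
Qed.

Lemma sum_adj (T : finType) (G : signed_graph T) x :
  \sum_z adjA G x z = netdeg G x.
Proof.
rewrite /netdeg /pdeg /ndeg.
have -> : \sum_z adjA G x z =
   \sum_z ((z \in [set y | posE G x y])%:R - (z \in [set y | negE G x y])%:R).
  apply: eq_bigr => z _; rewrite !inE /adjA /posE /negE.
  by case: (sg_edge G x z); case: (sg_pos G x z).
by rewrite sumrB !sum_ind !natz.
Qed.

Lemma sum_delta (T : finType) (F : T -> int) v : \sum_z F z * (z == v)%:R = F v.
Proof.
rewrite (bigD1 v) //= eqxx mulr1 big1 ?addr0 // => z /negbTE ->.
by rewrite mulr0.
Qed.

Lemma balance (T : finType) (G : signed_graph T) (a b c : int)
  (Hd : forall x, adjA2 G x x = (5%N)%:Z)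
  (Hp : forall x y, posE G x y -> adjA2 G x y = a)
  (Hn : forall x y, negE G x y -> adjA2 G x y = b)
  (Hc : forall x y, x != y -> ~~ sg_edge G x y -> adjA2 G x y = c)
  (Hnet : net_regular G 1) (Habc : a + b != 2 * c) x v :
  \sum_z adjA G x z * absv (adjA G z v) = \sum_z absv (adjA G x z) * adjA G z v.
Proof.
have key : forall z w, 2 * adjA2 G z w = 2*c + 2*(5-c)*(z==w)%:R
     + (a+b-2*c)*absv(adjA G z w) + (a-b)*adjA G z w.
  move=> z w; case: (eqVneq z w) => [->|nzw].
    by rewrite Hd adjA_xx /absv eqxx /=; ring.
  rewrite /= mulr0 addr0.
  case HE: (sg_edge G z w); last first.
    by rewrite Hc ?HE // /adjA HE /absv eqxx; ring.
  case HP: (sg_pos G z w).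
    by rewrite Hp ?/posE ?HE ?HP // /adjA HE HP /absv; ring.
  by rewrite Hn ?/negE ?HE ?HP // /adjA HE HP /absv; ring.
have LR : \sum_z adjA G x z * adjA2 G z v = \sum_z adjA2 G x z * adjA G z v.
  rewrite /adjA2.
  under eq_bigr do rewrite big_distrr.
  under [RHS]eq_bigr do rewrite big_distrl.
  rewrite [RHS]exchange_big; apply: eq_bigr => z _; apply: eq_bigr => w _.
  exact: mulrA.
set S1 := \sum_z adjA G x z * absv (adjA G z v).
set S1' := \sum_z absv (adjA G x z) * adjA G z v.
set S0 := \sum_z adjA G x z * adjA G z v.
have L2 : 2 * \sum_z adjA G x z * adjA2 G z v =
   2*c*netdeg G x + 2*(5-c)*adjA G x v + (a+b-2*c)*S1 + (a-b)*S0.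
  rewrite mulr_sumr.
  transitivity (\sum_z (2*c * adjA G x z + 2*(5-c)*(adjA G x z * (z==v)%:R)
     + (a+b-2*c)*(adjA G x z * absv(adjA G z v)) + (a-b)*(adjA G x z * adjA G z v))).
    by apply: eq_bigr => z _; rewrite mulrCA key; ring.
  by rewrite !big_split /= -!mulr_sumr sum_adj sum_delta.
have R2 : 2 * \sum_z adjA2 G x z * adjA G z v =
   2*c*netdeg G v + 2*(5-c)*adjA G x v + (a+b-2*c)*S1' + (a-b)*S0.
  rewrite mulr_sumr.
  transitivity (\sum_z (2*c * adjA G v z + 2*(5-c)*((x==z)%:R * adjA G z v)
     + (a+b-2*c)*(absv(adjA G x z) * adjA G z v) + (a-b)*(adjA G x z * adjA G z v))).
    by apply: eq_bigr => z _; rewrite mulrA key (adjA_sym G v z); ring.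
  rewrite !big_split /= -!mulr_sumr sum_adj; congr (_ + _ + _ + _).
  rewrite (bigD1 x) //= eqxx mul1r big1 ?addr0 // => z /negbTE.
  by rewrite eq_sym => ->; rewrite mul0r.
have : (a+b-2*c)*(S1-S1') = 0.
  have -> : (a+b-2*c)*(S1-S1') = 2 * \sum_z adjA G x z * adjA2 G z v
       - 2 * \sum_z adjA2 G x z * adjA G z v - 2*c*netdeg G x + 2*c*netdeg G v.
    by rewrite L2 R2; ring.
  by rewrite LR !Hnet; ring.
move/eqP; rewrite mulf_eq0 => /orP[|]; last by rewrite subr_eq0 => /eqP.
by rewrite subr_eq0 (negbTE Habc).
Qed.

Definition nbs (T : finType) (G : signed_graph T) x : seq T :=
  enum [set y | posE G x y] ++ enum [set y | negE G x y].
Definition fx (T : finType) (G : signed_graph T) x i := nth x (nbs G x) i.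

Lemma size_nbs (T : finType) (G : signed_graph T) x :
  pdeg G x = 3%N -> ndeg G x = 2%N -> size (nbs G x) = 5%N.
Proof. by move=> Hp Hn; rewrite size_cat -!cardE -/(pdeg G x) -/(ndeg G x) Hp Hn. Qed.

Lemma mem_nbs (T : finType) (G : signed_graph T) x z :
  (z \in nbs G x) = sg_edge G x z.
Proof.
rewrite mem_cat !mem_enum !inE /posE /negE.
by case: (sg_edge G x z); case: (sg_pos G x z).
Qed.

Lemma uniq_nbs (T : finType) (G : signed_graph T) x : uniq (nbs G x).
Proof.
rewrite cat_uniq !enum_uniq /= andbT; apply/hasPn => z.
rewrite !mem_enum !inE /posE /negE => /andP[_ /negbTE ->].
by rewrite andbF.
Qed.

Lemma sgn_f (T : finType) (G : signed_graph T) x i :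
  pdeg G x = 3%N -> ndeg G x = 2%N -> (i < 5)%N -> adjA G x (fx G x i) = sgn i.
Proof.
move=> Hp Hn Hi; rewrite /fx /nbs nth_cat -cardE -/(pdeg G x) Hp /sgn.
case: ifP => Hi3.
  have : nth x (enum [set y | posE G x y]) i \in enum [set y | posE G x y].
    by apply: mem_nth; rewrite -cardE -/(pdeg G x) Hp.
  by rewrite mem_enum inE /posE /adjA => /andP[-> ->].
have : nth x (enum [set y | negE G x y]) (i - 3) \in enum [set y | negE G x y].
  by apply: mem_nth; rewrite -cardE -/(ndeg G x) Hn; lia.
by rewrite mem_enum inE /negE /adjA => /andP[-> /negbTE ->].
Qed.

Lemma edge_f (T : finType) (G : signed_graph T) x i :
  pdeg G x = 3%N -> ndeg G x = 2%N -> (i < 5)%N -> sg_edge G x (fx G x i).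
Proof.
move=> Hp Hn Hi; rewrite -mem_nbs /fx mem_nth // size_nbs //.
Qed.

Lemma f_inj (T : finType) (G : signed_graph T) x i j :
  pdeg G x = 3%N -> ndeg G x = 2%N -> (i < 5)%N -> (j < 5)%N ->
  fx G x i = fx G x j -> i = j.
Proof.
move=> Hp Hn Hi Hj /eqP; rewrite /fx nth_uniq ?size_nbs ?uniq_nbs //.
by move/eqP.
Qed.

Lemma f_surj (T : finType) (G : signed_graph T) x z :
  pdeg G x = 3%N -> ndeg G x = 2%N -> sg_edge G x z ->
  exists2 i, (i < 5)%N & z = fx G x i.
Proof.
move=> Hp Hn; rewrite -mem_nbs => Hz; exists (index z (nbs G x)).
  by rewrite -(size_nbs Hp Hn) index_mem.
by rewrite /fx nth_index.
Qed.

Lemma sum_loc (T : finType) (G : signed_graph T) x (F : T -> int) :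
  pdeg G x = 3%N -> ndeg G x = 2%N ->
  (forall z, ~~ sg_edge G x z -> F z = 0) ->
  \sum_z F z = sumL (fun j => F (fx G x j)).
Proof.
move=> Hp Hn HF.
have -> : \sum_z F z = \sum_(z <- nbs G x) F z.
  rewrite [RHS]big_uniq ?uniq_nbs //= [RHS]big_mkcond /=; apply: eq_bigr => z _.
  by case: ifP => // ; rewrite mem_nbs => /negbT /HF.
rewrite (big_nth x) size_nbs // /index_iota subn0 /=.
by rewrite !big_cons big_nil.
Qed.



Definition eloc (T : finType) (G : signed_graph T) x :=
  let f := fx G x in
  mk (adjA G (f 0%N) (f 1%N)) (adjA G (f 0%N) (f 2%N)) (adjA G (f 0%N) (f 3%N))
     (adjA G (f 0%N) (f 4%N)) (adjA G (f 1%N) (f 2%N)) (adjA G (f 1%N) (f 3%N))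
     (adjA G (f 1%N) (f 4%N)) (adjA G (f 2%N) (f 3%N)) (adjA G (f 2%N) (f 4%N))
     (adjA G (f 3%N) (f 4%N)).

Lemma eloc_spec (T : finType) (G : signed_graph T) x i j :
  (i < 5)%N -> (j < 5)%N -> eloc G x i j = adjA G (fx G x i) (fx G x j).
Proof.
rewrite /eloc.
case: i => [|[|[|[|[|i]]]]] Hi //; case: j => [|[|[|[|[|j]]]]] Hj //=;
  by rewrite ?adjA_xx // adjA_sym.
Qed.

Lemma eq_sumL (F H : nat -> int) : (forall j, (j < 5)%N -> F j = H j) -> sumL F = sumL H.
Proof. by move=> E; rewrite /sumL /= !E. Qed.

Lemma idx_lt i : i \in idx -> (i < 5)%N.
Proof. by have : all (fun i => i < 5)%N idx by []; move/allP/(_ i). Qed.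

Lemma count_bound (T : finType) (G : signed_graph T) x (P : nat -> bool) (Q : T -> bool)
  (beta : bool) k :
  pdeg G x = 3%N -> ndeg G x = 2%N ->
  #|[set y | Q y]| = k -> (beta -> Q x) ->
  (forall j, (j < 5)%N -> P j -> Q (fx G x j)) ->
  (beta + count P idx <= k)%N.
Proof.
move=> Hp Hn Hk Hb HP.
set L := [seq fx G x j | j <- filter P idx].
have uL : uniq L.
  rewrite map_inj_in_uniq ?filter_uniq // => i j.
  rewrite !mem_filter => /andP[_ /idx_lt Hi] /andP[_ /idx_lt Hj].
  exact: f_inj.
have xL : x \notin L.
  apply/mapP => -[j]; rewrite mem_filter => /andP[_ /idx_lt Hj] Hx.
  by move: (edge_f Hp Hn Hj); rewrite -Hx sg_irr.
have sL : size L = count P idx by rewrite size_map size_filter.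
have sub : {subset (if beta then x :: L else L) <= enum [set y | Q y]}.
  move=> y; rewrite mem_enum inE.
  have HL : y \in L -> Q y.
    by move/mapP => -[j]; rewrite mem_filter => /andP[Pj /idx_lt Hj] ->; apply: HP.
  case: beta Hb => Hb //; rewrite inE => /orP[/eqP->|]; [exact: Hb|exact: HL].
have := uniq_leq_size _ sub; rewrite -cardE Hk.
by case: beta {Hb sub} => /=; rewrite ?xL sL; apply.
Qed.

Lemma posE_sym (T : finType) (G : signed_graph T) x y : posE G x y = posE G y x.
Proof. by rewrite /posE (sg_sym G x y) (sg_pos_sym G x y). Qed.
Lemma negE_sym (T : finType) (G : signed_graph T) x y : negE G x y = negE G y x.
Proof. by rewrite /negE (sg_sym G x y) (sg_pos_sym G x y). Qed.

Lemma countL_count P : countL P = count P idx.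
Proof. by []. Qed.

Lemma local (T : finType) (G : signed_graph T) (a b c : int)
  (Hd : forall x, adjA2 G x x = (5%N)%:Z)
  (Hp : forall x y, posE G x y -> adjA2 G x y = a)
  (Hn : forall x y, negE G x y -> adjA2 G x y = b)
  (Hc : forall x y, x != y -> ~~ sg_edge G x y -> adjA2 G x y = c)
  (Hreg : regular G 5) (Hnet : net_regular G 1) (Habc : a + b != 2 * c) x :
  concl (eloc G x) a b.
Proof.
have [Px Nx] := degs x Hreg Hnet.
have Hck : check (eloc G x).
  have := all_ok; rewrite /eloc.
  move/allP/(_ _ (adjA_vals G (fx G x 0) (fx G x 1))).
  move/allP/(_ _ (adjA_vals G (fx G x 0) (fx G x 2))).
  move/allP/(_ _ (adjA_vals G (fx G x 0) (fx G x 3))).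
  move/allP/(_ _ (adjA_vals G (fx G x 0) (fx G x 4))).
  move/allP/(_ _ (adjA_vals G (fx G x 1) (fx G x 2))).
  move/allP/(_ _ (adjA_vals G (fx G x 1) (fx G x 3))).
  move/allP/(_ _ (adjA_vals G (fx G x 1) (fx G x 4))).
  move/allP/(_ _ (adjA_vals G (fx G x 2) (fx G x 3))).
  move/allP/(_ _ (adjA_vals G (fx G x 2) (fx G x 4))).
  by move/allP/(_ _ (adjA_vals G (fx G x 3) (fx G x 4))).
have Hz : forall (F : T -> int) z, ~~ sg_edge G x z -> adjA G x z * F z = 0.
  by move=> F z H; rewrite /adjA (negbTE H) mul0r.
have Hav : forall i, (i < 5)%N -> av (eloc G x) i = adjA2 G x (fx G x i).
  move=> i Hi; rewrite /av /adjA2 (@sum_loc _ G x (fun z => adjA G x z * adjA G z (fx G x i))) //.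
    by apply: eq_sumL => j Hj; rewrite sgn_f // eloc_spec.
  by move=> z H; rewrite /adjA (negbTE H) mul0r.
have HpE : forall i, (i < 3)%N -> posE G x (fx G x i).
  by move=> i Hi; rewrite -adjA_pos sgn_f ?(ltn_trans Hi) // /sgn Hi.
have HnE : forall i, (3 <= i < 5)%N -> negE G x (fx G x i).
  by move=> i /andP[Hi Hi5]; rewrite -adjA_neg sgn_f // /sgn ltnNge Hi.
have Ha : forall i, (i < 3)%N -> av (eloc G x) i = a.
  by move=> i Hi; rewrite Hav ?(ltn_trans Hi) // Hp // HpE.
have Hb : forall i, (3 <= i < 5)%N -> av (eloc G x) i = b.
  by move=> i Hi; case/andP: (Hi) => _ Hi5; rewrite Hav // Hn // HnE.
have Hcond : cond (eloc G x).
  rewrite /cond (Ha 0%N) // (Ha 1%N) // (Ha 2%N) // (Hb 3%N) // (Hb 4%N) // !eqxx !andbT.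
  apply/allP => i /idx_lt Hi; rewrite !countL_count.
  apply/andP; split; first (apply/andP; split).
  - apply: (@count_bound _ G x _ ( posE G (fx G x i))) => //.
    + by have [] := degs (fx G x i) Hreg Hnet.
    + by move=> Hi3; rewrite posE_sym HpE.
    + by move=> j Hj; rewrite eloc_spec // adjA_pos.
  - apply: (@count_bound _ G x _ ( negE G (fx G x i))) => //.
    + by have [] := degs (fx G x i) Hreg Hnet.
    + by move=> Hi3; rewrite negE_sym HnE // Hi3.
    + by move=> j Hj; rewrite eloc_spec // adjA_neg.
  - have := balance Hd Hp Hn Hc Hnet Habc x (fx G x i).
    rewrite (@sum_loc _ G x (fun z => adjA G x z * absv (adjA G z (fx G x i)))) //;
      last by move=> z H; rewrite /adjA (negbTE H) mul0r.
    rewrite (@sum_loc _ G x (fun z => absv (adjA G x z) * adjA G z (fx G x i))) //; last first.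
      by move=> z H; rewrite /adjA (negbTE H) /absv eqxx mul0r.
    move=> E; apply/eqP; rewrite -[LHS]/(sumL _) -[RHS]/(sumL _).
    transitivity (sumL (fun j => adjA G x (fx G x j) * absv (adjA G (fx G x j) (fx G x i)))).
      by apply: eq_sumL => j Hj; rewrite sgn_f // eloc_spec.
    rewrite E; apply: eq_sumL => j Hj; rewrite sgn_f // eloc_spec //.
    have -> : absv (sgn j) = 1 by rewrite /sgn; case: (j < 3)%N; reflexivity.
    by rewrite mul1r.
by move: Hck; rewrite /check Hcond /= (Ha 0%N) // (Hb 3%N).
Qed.



Lemma lt_idx i : (i < 5)%N -> i \in idx.
Proof. by case: i => [|[|[|[|[|i]]]]]. Qed.

Lemma concl_spec e a b : concl e a b ->
  [/\ (a = -4 /\ (b = 3 \/ b = 4)) \/ (a = 0 /\ (b = 0 \/ b = 1)) \/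
        (a = 2 /\ (b = -2 \/ b = 0 \/ b = 1)),
      a = 0 -> forall i j, (i < 3)%N -> (j < 5)%N -> e i j = 0,
      b = 0 -> forall i j, (3 <= i)%N -> (i < 5)%N -> (j < 5)%N -> e i j = 0,
      e 3%N 4%N = 1 -> b <= 0 &
      [/\ a = -4 -> e 0%N 1%N = -1 /\ e 0%N 2%N = -1 /\ e 1%N 2%N <> 0,
          a = -4 -> e 3%N 4%N <> 0 -> b = 4 &
          a = -4 -> b = 4 -> forall i j, (i < 5)%N -> (j < 5)%N -> i <> j -> e i j <> 0]].
Proof.
rewrite /concl => /and5P[H1 H2 H3 H4 /and3P[H5 H6 H7]].
split.
- move: H1 => /or4P[|||/orP[|/orP[|/orP[]]]] /andP[/eqP-> /eqP->]; tauto.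
- move=> Ha i j Hi Hj; move: H2; rewrite Ha eqxx implyTb => /allP H2.
  have Hi5 : (i < 5)%N by apply: (ltn_trans Hi).
  have /allP := H2 i (lt_idx Hi5); move/(_ j (lt_idx Hj)).
  by rewrite leqNgt Hi /= => /eqP.
- move=> Hb i j Hi Hi5 Hj; move: H3; rewrite Hb eqxx implyTb => /allP H3.
  have /allP := H3 i (lt_idx Hi5); move/(_ j (lt_idx Hj)).
  by rewrite ltnNge Hi /= => /eqP.
- by move=> E; move: H4; rewrite E eqxx.
split.
- move=> Ha; move: H5; rewrite Ha eqxx /= => /and3P[/eqP -> /eqP -> /eqP].
  by [].
- by move=> Ha /eqP Hn; move: H6; rewrite Ha eqxx Hn /= => /eqP.
- move=> Ha Hb i j Hi Hj Hij; move: H7; rewrite Ha Hb !eqxx implyTb => /allP H7.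
  have /allP := H7 i (lt_idx Hi); move/(_ j (lt_idx Hj)).
  by case: eqP => // _ /= /eqP.
Qed.

Lemma nb_pos (T : finType) (G : signed_graph T) x z :
  pdeg G x = 3%N -> ndeg G x = 2%N -> posE G x z -> exists2 i, (i < 3)%N & z = fx G x i.
Proof.
move=> Hp Hn Hz; have /andP[HE _] := Hz.
have [i Hi Ez] := f_surj Hp Hn HE; exists i => //.
move: Hz; rewrite Ez -adjA_pos sgn_f // /sgn; by case: ifP.
Qed.

Lemma nb_neg (T : finType) (G : signed_graph T) x z :
  pdeg G x = 3%N -> ndeg G x = 2%N -> negE G x z ->
  exists2 i, (3 <= i < 5)%N & z = fx G x i.
Proof.
move=> Hp Hn Hz; have /andP[HE _] := Hz.
have [i Hi Ez] := f_surj Hp Hn HE; exists i => //.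
move: Hz; rewrite Ez -adjA_neg sgn_f // /sgn Hi andbT; case: ifP => //.
by move/negbT; rewrite -leqNgt.
Qed.

Lemma path_closed (T : finType) (e : rel T) (S : pred T) :
  (forall u v, S u -> e u v -> S v) -> forall p u, S u -> path e u p -> S (last u p).
Proof.
move=> HS; elim=> [|v p IH] u Su //= /andP[Huv Hp].
by apply: IH => //; apply: HS Huv.
Qed.

Lemma not_a4 (T : finType) (G : signed_graph T) (a b : int)
  (HL : forall x, concl (eloc G x) a b)
  (Hreg : regular G 5) (Hnet : net_regular G 1)
  (Hconn : connected G) (Hnc : ~ complete G) (x : T) : a <> -4.
Proof.
move=> Ha.
have [Px Nx] := degs x Hreg Hnet.
have [_ _ _ _ [H5 H6 H7]] := concl_spec (HL x).
have [H01 [H02 H12]] := H5 Ha.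
rewrite !eloc_spec // in H01 H02 H12.
set y := fx G x 0.
have [Py Ny] := degs y Hreg Hnet.
have N1 : negE G y (fx G x 1) by rewrite -adjA_neg H01.
have N2 : negE G y (fx G x 2) by rewrite -adjA_neg H02.
have [i Hi E1] := nb_neg Py Ny N1.
have [j Hj E2] := nb_neg Py Ny N2.
have f12 : fx G x 1 != fx G x 2 by apply/eqP => /f_inj -/(_ Px Nx isT isT).
have Hij : eloc G y 3 4 <> 0.
  rewrite eloc_spec //.
  have : (((i == 3) && (j == 4)) || ((i == 4) && (j == 3)))%N.
    have : i != j by apply/eqP => Eij; move: f12; rewrite E1 E2 Eij eqxx.
    move: Hi Hj; clear; lia.
  case/orP => /andP[/eqP Ei /eqP Ej]; subst i j; rewrite -E1 -E2 //.
  by rewrite adjA_sym => H; apply: H12.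
have [_ _ _ _ [_ H6y _]] := concl_spec (HL y).
have Hb4 := H6y Ha Hij.
have Hall := H7 Ha Hb4.
pose S := fun z => (z == x) || sg_edge G x z.
have HS : forall u v, S u -> sg_edge G u v -> S v.
  move=> u v /orP[/eqP->|Hu] Huv; first by rewrite /S Huv orbT.
  apply/negPn/negP => Hv.
  have [k Hk Ek] := f_surj Px Nx Hu.
  set L := [:: x, v & [seq fx G x l | l <- filter (fun l => l != k) idx]].
  have uL : uniq L.
    rewrite /L !cons_uniq in_cons negb_or; apply/andP; split; last (apply/andP; split).
    - apply/andP; split; first by apply/eqP => Exv; move: Hv; rewrite /S -Exv eqxx.
      apply/mapP => -[l]; rewrite mem_filter => /andP[_ /idx_lt Hl] Hx.
      by move: (edge_f Px Nx Hl); rewrite -Hx sg_irr.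
    - apply/mapP => -[l]; rewrite mem_filter => /andP[_ /idx_lt Hl] Hx.
      by move: Hv; rewrite /S Hx (edge_f Px Nx Hl) orbT.
    - rewrite map_inj_in_uniq ?filter_uniq // => l l'.
      rewrite !mem_filter => /andP[_ /idx_lt Hl] /andP[_ /idx_lt Hl'].
      exact: f_inj.
  have sub : {subset L <= enum [set w | sg_edge G u w]}.
    move=> w; rewrite mem_enum inE /L !inE => /orP[/eqP->|/orP[/eqP->//|]].
      by rewrite sg_sym.
    case/mapP => l; rewrite mem_filter => /andP[Hlk /idx_lt Hl] ->.
    rewrite Ek -adjA_E -(eloc_spec G x Hk Hl).
    by apply/eqP; apply: Hall => // Ekl; move: Hlk; rewrite Ekl eqxx.
  have sz : size L = 6%N.
    by rewrite /L /=; move: Hk; clear; case: k => [|[|[|[|[|k]]]]].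
  by have := uniq_leq_size uL sub; rewrite -cardE -/(degree G u) Hreg sz.
have HSall : forall z, S z.
  move=> z; have /connectP[p Hp ->] := Hconn x z.
  by apply: (path_closed HS) => //; rewrite /S eqxx.
apply: Hnc => u v Huv.
have := HSall u; have := HSall v; rewrite /S.
case: (eqVneq u x) => [Eu|Nu]; first by rewrite Eu; case/orP => // /eqP Evx; move: Huv; rewrite Eu Evx eqxx.
case: (eqVneq v x) => [Ev|Nv] /=; first by move=> _; rewrite Ev sg_sym.
move=> Hv Hu.
have [k Hk Ek] := f_surj Px Nx Hu.
have [l Hl El] := f_surj Px Nx Hv.
rewrite Ek El -adjA_E -(eloc_spec G x Hk Hl); apply/eqP; apply: Hall => // Ekl.
by move: Huv; rewrite Ek El Ekl eqxx.
Qed.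

Unset Implicit Arguments.

Theorem proposition3p4 (T : finType) (G : signed_graph T) (n : nat) (a b c : int) :
  (class_C1 G n 5 a b c \/ class_C4 G n 5 a b c \/ class_C5 G n 5 a b c) ->
  connected G -> ~ complete G -> regular G 5 -> net_regular G 1 ->
  a < 3 /\
      (a = 0 -> forall x y, posE G x y -> no_common_nb G x y) /\
      (b = 0 -> forall x y, negE G x y -> no_common_nb G x y) /\
      (a = -1 -> b <= 0) /\
      (a = -2 -> b >= -1) /\
      a > -3 /\
      -2 <= b < 3 /\
      ((exists x y z, balanced_triangle G x y z && negE G x y && negE G y z) -> b <= 0) /\
      (b = 2 \/ b = -1 -> a <= 0) /\
      (b = -2 -> a >= 1).
Proof.
move=> Hcl Hconn Hnc Hreg Hnet.
have [Hs Habc] : SRSG G n 5 a b c /\ a + b != 2 * c.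
  case: Hcl => [[Hs _ Hab Hcomp]|[[Hs _ Hab _ Hc0]|[Hs _ Hab _ [Hc0 H2c]]]];
    split => //; apply/eqP.
  - by case: Hcomp => [//|[_ Hc0]]; lia.
  - lia.
  - lia.
case: Hs => _ _ Hne [Hd Hp Hn Hc].
have HL := local Hd Hp Hn Hc Hreg Hnet Habc.
have [x0 _] : exists x0 : T, True.
  case: (pickP (fun x : T => true)) => [x0 _|H]; first by exists x0.
  by exfalso; apply: Hne => x y; have := H x.
have Ha4 := not_a4 HL Hreg Hnet Hconn Hnc x0.
have [Hab _ _ _ _] := concl_spec (HL x0).
have C2a : a = 0 -> forall x y, posE G x y -> no_common_nb G x y.
  move=> Ha0 x y Hxy z; have [Px Nx] := degs x Hreg Hnet.
  have [i Hi Ey] := nb_pos Px Nx Hxy.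
  have Hi5 : (i < 5)%N by apply: (ltn_trans Hi).
  apply/negP => /andP[Hxz Hyz]; have [j Hj Ez] := f_surj Px Nx Hxz.
  have [_ H2x _ _ _] := concl_spec (HL x).
  have := H2x Ha0 i j Hi Hj; rewrite eloc_spec // -Ey -Ez => E0.
  by move: Hyz; rewrite -adjA_E E0 eqxx.
have C2b : b = 0 -> forall x y, negE G x y -> no_common_nb G x y.
  move=> Hb0 x y Hxy z; have [Px Nx] := degs x Hreg Hnet.
  have [i /andP[Hi Hi5] Ey] := nb_neg Px Nx Hxy.
  apply/negP => /andP[Hxz Hyz]; have [j Hj Ez] := f_surj Px Nx Hxz.
  have [_ _ H3x _ _] := concl_spec (HL x).
  have := H3x Hb0 i j Hi Hi5 Hj; rewrite eloc_spec // -Ey -Ez => E0.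
  by move: Hyz; rewrite -adjA_E E0 eqxx.
have C7 : (exists x y z, balanced_triangle G x y z && negE G x y && negE G y z) -> b <= 0.
  move=> [x [y [z /andP[/andP[Hbal Nxy] Nyz]]]].
  move: Hbal => /and4P[_ _ Ezx /eqP Hprod].
  have [Py Ny] := degs y Hreg Hnet.
  have Nyx : negE G y x by rewrite negE_sym.
  have [i Hi Ex] := nb_neg Py Ny Nyx.
  have [j Hj Ez] := nb_neg Py Ny Nyz.
  have Axy : adjA G x y = -1 by apply/eqP; rewrite adjA_neg.
  have Ayz : adjA G y z = -1 by apply/eqP; rewrite adjA_neg.
  have Azx : adjA G z x = 1.
    by move: Hprod; rewrite Axy Ayz mulrNN mulr1 mul1r.
  have [_ _ _ H4y _] := concl_spec (HL y).
  apply: H4y; rewrite eloc_spec //.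
  have : (((i == 3) && (j == 4)) || ((i == 4) && (j == 3)))%N.
    have : i != j by apply/eqP => Eij; move: Ezx; rewrite Ex Ez Eij sg_irr.
    move: Hi Hj; clear; lia.
  case/orP => /andP[/eqP Ei /eqP Ej]; subst i j; rewrite -Ex -Ez //.
  by rewrite adjA_sym.
have Hab' : (a = 0 /\ (b = 0 \/ b = 1)) \/ (a = 2 /\ (b = -2 \/ b = 0 \/ b = 1)).
  by case: Hab => [[]|] //.
repeat split.
all: try assumption.
all: move: Hab'; clear; lia.
Qed.
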